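(* Let $p>3$ be a prime and let $d\in\mathbb{Z}$. Write $n=(p-1)/2$ and define $$S(d,p)=\det\left[\left(\frac{j^2+dk^2}{p}\right)\right]_{1\le j,k\le n},\qquad T(d,p)=\det\left[\left(\frac{j^2+dk^2}{p}\right)\right]_{0\le j,k\le n}.$$ (i) Let $\bar S(d,p)$ be the determinant obtained from $\det\left[\left(\frac{j^2+dk^2}{p}\right)\right]_{1\le j,k\le n}$ by replacing all the entries in the first row (the row $j=1$) by $1$. If $\left(\frac dp\right)=1$, then $\bar S(d,p)=-S(d,p)$. If $\left(\frac dp\right)=-1$, then $$\bar S(d,p)=\frac{2}{p-1}T(d,p)=\frac{p-1}{2}\det\left[\left(\frac{j^2+dk^2}{p}\right)\right]_{2\le j,k\le n}.$$ (ii) For any integer $m$ with $(p-1)/2<m<p-1$, the determinant $T_m(d,p)=\det\left[(j^2+dk^2)^m\right]_{0\le j,k\le (p-1)/2}$ satisfies $T_m(d,p)\equiv 0\pmod p$.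
   Context: $\left(\frac{\cdot}{p}\right)$ denotes the Legendre symbol modulo $p$ (with $\left(\frac{0}{p}\right)=0$). *)

(* Defs.v *)
From mathcomp Require Import all_boot all_order all_algebra.
Set Implicit Arguments. Unset Strict Implicit. Unset Printing Implicit Defensive.
Import Order.TTheory GRing.Theory Num.Theory.
Local Open Scope ring_scope.

Definition legendre (a : int) (p : nat) : int :=
  if (p%:Z %| a)%Z then 0
  else if [exists x : 'I_p, ((x%:Z) ^+ 2 == a %[mod p%:Z])%Z] then 1 else -1.

Definition leg_entry (d : int) (p j k : nat) : int :=
  legendre ((j%:Z) ^+ 2 + d * (k%:Z) ^+ 2) p.

(* The N x N matrix [((j^2 + d k^2)/p)]_{off <= j,k <= off + N - 1};
   matrix index i : 'I_N corresponds to j = i + off. *)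
Definition leg_mx (d : int) (p off N : nat) : 'M[int]_N :=
  \matrix_(i < N, k < N) leg_entry d p (i + off) (k + off).

Definition leg_mx_bar (d : int) (p N : nat) : 'M[int]_N :=
  \matrix_(i < N, k < N)
    (if (i : nat) == 0%N then 1 else leg_entry d p i.+1 k.+1).

Definition pow_mx (d : int) (m N : nat) : 'M[int]_N :=
  \matrix_(i < N, k < N) ((i%:Z) ^+ 2 + d * (k%:Z) ^+ 2) ^+ m.

(* Main.v *)
Require Import Defs.
From mathcomp Require Import all_boot all_order all_algebra finfield.
From mathcomp Require Import zify ring.
Set Implicit Arguments. Unset Strict Implicit. Unset Printing Implicit Defensive.
Import Order.TTheory GRing.Theory Num.Theory.
Local Open Scope ring_scope.

Section Fp.
Variable p : nat.
Hypothesis pp : prime p.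
Local Notation F := ('F_p).

Lemma Fp_nat_eq0 (u : nat) : ((u%:R : F) == 0) = (p %| u)%N.
Proof. by rewrite (dvdn_pcharf (pchar_Fp pp)). Qed.

Lemma Fp_nat_inj (u v : nat) : (u < p)%N -> (v < p)%N -> (u%:R : F) = v%:R -> u = v.
Proof.
move=> up vp /(congr1 val) /=; rewrite !val_Fp_nat // !modn_small //.
Qed.

Lemma Fp_int_eq0 (z : int) : ((z%:~R : F) == 0) = (p %| z)%Z.
Proof. by rewrite (dvdz_pcharf (pchar_Fp pp)). Qed.

Lemma fermat (x : F) : x != 0 -> x ^+ p.-1 = 1.
Proof.
move=> x0; have := expf_card x; rewrite card_Fp //.
have p0 := prime_gt0 pp => h.
have : x ^+ (p.-1).+1 = x by rewrite prednK.
rewrite exprS => H; apply: (mulfI x0); by rewrite mulr1.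
Qed.

Lemma exists_nonunity (e : nat) : (0 < e)%N -> (e < p.-1)%N ->
  exists2 a : F, a != 0 & a ^+ e != 1.
Proof.
move=> e0 ep; case: (pickP (fun a : F => (a != 0) && (a ^+ e != 1))) => [a /andP[]|H].
  by exists a.
suff : (p.-1 <= e)%N by rewrite leqNgt ep.
have := @max_unity_roots F e (enum (predC1 (0:F))) e0.
rewrite enum_uniq -cardE cardC1 card_Fp //; apply => //.
apply/allP => x; rewrite mem_enum /= => x0; rewrite unity_rootE.
by have := H x; move: x0; rewrite inE => -> /= => /negbFE.
Qed.

Lemma sum_pow0 (e : nat) : (0 < e)%N -> (e < p.-1)%N -> \sum_(x : F) x ^+ e = 0.
Proof.
move=> e0 ep; have [a a0 ae] := exists_nonunity e0 ep.
have : \sum_(x : F) x ^+ e = a ^+ e * \sum_(x : F) x ^+ e.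
  rewrite mulr_sumr (reindex_inj (mulfI a0)) /=; apply: eq_bigr => x _; by rewrite exprMn.
move/eqP; rewrite -subr_eq0 -{1}[\sum_(x : F) _]mul1r -mulrBl mulf_eq0 subr_eq0 eq_sym (negbTE ae) /=.
by move/eqP.
Qed.

Lemma Fp_pm1 : ((p.-1)%:R : F) = -1.
Proof.
have h : ((p.-1).+1%:R : F) = 0 by rewrite prednK ?prime_gt0 // pchar_Fp_0.
by apply/eqP; rewrite -addr_eq0 addrC -mulrS h.
Qed.

Lemma sum_powp1 : \sum_(x : F) x ^+ p.-1 = -1.
Proof.
rewrite (bigD1 0) //= expr0n /=.
have -> : (p.-1 == 0)%N = false by case: p pp => [|[|]].
rewrite add0r (eq_bigr (fun _ => 1)); last by move=> x; apply: fermat.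
by rewrite sumr_const cardC1 card_Fp // Fp_pm1.
Qed.

Lemma sum_pow_0 : \sum_(x : F) x ^+ 0 = 0.
Proof.
by rewrite (eq_bigr (fun _ => 1)) // sumr_const card_Fp // pchar_Fp_0.
Qed.
End Fp.

Section Fpn.
Variables (p n : nat).
Hypothesis pp : prime p.
Hypothesis hpn : p = n.*2.+1.
Local Notation F := ('F_p).

Lemma n_gt0 : (0 < n)%N.
Proof. by move: pp; rewrite hpn; case: n. Qed.

Lemma pm1 : p.-1 = n.*2.
Proof. by rewrite hpn. Qed.

Lemma sum_quad (a b : F) : \sum_(x : F) (a + b * x ^+ 2) ^+ n = - b ^+ n.
Proof.
have inner i : \sum_(x:F) a ^+ (n - i) * (b * x ^+ 2) ^+ i *+ 'C(n, i)
   = (a ^+ (n - i) * b ^+ i *+ 'C(n, i)) * \sum_(x:F) x ^+ (i.*2).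
  rewrite mulr_sumr; apply: eq_bigr => x _.
  by rewrite exprMn -exprM -mul2n mulrnAl !mulrA.
under eq_bigr do rewrite exprDn.
rewrite exchange_big /= big_ord_recr /= big1 ?add0r; last first.
  move=> i _; rewrite inner; case: (posnP i) => [->|i0].
    by rewrite sum_pow_0 // mulr0.
  rewrite sum_pow0 ?mulr0 //; first by rewrite double_gt0.
  by rewrite pm1 ltn_double.
rewrite inner subnn expr0 mul1r binn mulr1n -pm1 sum_powp1 //.
by rewrite mulrN1.
Qed.
End Fpn.

Lemma sumFp_nat (p : nat) (pp : prime p) (g : 'F_p -> 'F_p) :
  \sum_(x : 'F_p) g x = \sum_(j < p) g j%:R.
Proof.
have inj : injective (fun j : 'I_p => (j%:R : 'F_p)).
  move=> i j /= /Fp_nat_inj H; apply: val_inj; exact: H.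
rewrite (reindex _ (onW_bij _ (inj_card_bij inj _))) //.
by rewrite card_Fp // card_ord.
Qed.

Section Fpn2.
Variables (p n : nat).
Hypothesis pp : prime p.
Hypothesis hpn : p = n.*2.+1.
Local Notation F := ('F_p).

Lemma sum_sq_split (h : F -> F) :
  \sum_(x : F) h (x ^+ 2) = h 0 + (\sum_(j < n) h ((j.+1)%:R ^+ 2)) *+ 2.
Proof.
rewrite sumFp_nat // -(big_mkord xpredT (fun j => h (j%:R ^+ 2))).
rewrite (big_cat_nat _ (n:=n.+1)) //=; last by rewrite hpn ltnS -addnn leq_addr.
rewrite big_ltn // expr0n /= -addrA; congr (_ + _).
rewrite mulr2n; congr (_ + _).
  by rewrite (big_addn 0 n.+1 1) subn1 big_mkord; apply: eq_bigr => i _; rewrite addn1.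
rewrite big_nat_rev /= (big_addn 0 p n.+1).
have -> : (p - n.+1 = n)%N by rewrite hpn -addnn; lia.
rewrite big_mkord; apply: eq_bigr => i _.
have -> : (n.+1 + p - (i + n.+1).+1 = p - i.+1)%N by lia.
rewrite natrB; last by rewrite hpn; have := ltn_ord i; lia.
by rewrite pchar_Fp_0 // sub0r sqrrN.
Qed.
End Fpn2.

Section Euler.
Variables (p n : nat).
Hypothesis pp : prime p.
Hypothesis hpn : p = n.*2.+1.
Local Notation F := ('F_p).

Lemma intr_natF (u : nat) : ((u%:Z)%:~R : F) = u%:R.
Proof. by rewrite -pmulrn. Qed.

Lemma Fp_int_eq (z w : int) : ((z%:~R : F) == w%:~R) = (z == w %[mod p%:Z])%Z.
Proof. by rewrite eqz_mod_dvd -Fp_int_eq0 // intrD intrN subr_eq0. Qed.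

Lemma Fp_nat_neq0 (u : nat) : (0 < u)%N -> (u < p)%N -> (u%:R : F) != 0.
Proof.
move=> u0 up; rewrite Fp_nat_eq0 //; apply/negP => /(dvdn_leq u0).
by rewrite leqNgt up.
Qed.

Lemma sq_inj (u v : nat) : (0 < u <= n)%N -> (0 < v <= n)%N ->
  (u%:R : F) ^+ 2 = v%:R ^+ 2 -> u = v.
Proof.
move=> /andP[u0 un] /andP[v0 vn] /eqP; rewrite -subr_eq0 subr_sqr mulf_eq0.
case/orP => [|].
  rewrite subr_eq0 => /eqP /(Fp_nat_inj pp); apply; rewrite hpn -addnn; lia.
rewrite -natrD => H; exfalso; move: H; apply/negP; apply: Fp_nat_neq0; rewrite ?hpn -?addnn; lia.
Qed.

Lemma euler (a : int) : ((legendre a p)%:~R : F) = (a%:~R : F) ^+ n.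
Proof.
have n0 := n_gt0 pp hpn.
rewrite /legendre; case: ifP => [pa|pa].
  have -> : (a%:~R : F) = 0 by apply/eqP; rewrite Fp_int_eq0.
  by rewrite expr0n; case: n n0.
have a0 : (a%:~R : F) != 0 by rewrite Fp_int_eq0 // pa.
case: ifP => [/existsP [x hx] | nx].
  move: hx; rewrite -Fp_int_eq rmorphXn /= intr_natF => /eqP hx.
  have x0 : ((x : nat)%:R : F) != 0 by apply: contra a0; rewrite -hx => /eqP ->; rewrite expr0n.
  by rewrite -hx -exprM mul2n -(pm1 hpn) fermat.
have fa : (a%:~R : F) ^+ n ^+ 2 = 1 by rewrite -exprM muln2 -(pm1 hpn) fermat.
have nota : (a%:~R : F) ^+ n != 1.
  apply/negP => /eqP an1.
  pose rs := (a%:~R : F) :: [seq ((j.+1)%:R : F) ^+ 2 | j <- iota 0 n].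
  have sq0 j : (j < n)%N -> ((j.+1)%:R : F) != 0.
    by move=> jn; apply: Fp_nat_neq0; rewrite // hpn -addnn; lia.
  have ur : all n.-unity_root rs.
    rewrite /= unity_rootE an1 eqxx /=; apply/allP => y /mapP [j jn ->].
    rewrite mem_iota add0n in jn.
    by rewrite unity_rootE -exprM mul2n -(pm1 hpn) fermat // sq0.
  have ur2 : uniq rs.
    rewrite /= map_inj_in_uniq ?iota_uniq ?andbT.
      apply/mapP => [[j jn hj]]; move/negbT/negP: nx; apply; apply/existsP.
      rewrite mem_iota add0n in jn.
      have jp : (j.+1 < p)%N by rewrite hpn -addnn; lia.
      exists (Ordinal jp); rewrite -Fp_int_eq rmorphXn /= intr_natF hj //.
    move=> i j; rewrite !mem_iota !add0n => /andP[_ ilt] /andP[_ jlt] /sq_inj H.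
    have h1 : (0 < i.+1 <= n)%N by lia.
    have h2 : (0 < j.+1 <= n)%N by lia.
    by case: (H h1 h2).
  have := max_unity_roots n0 ur ur2.
  by rewrite /rs /= size_map size_iota ltnn.
set y := (a%:~R : F) ^+ n in fa nota *.
have : (y - 1) * (y + 1) = 0 by rewrite -subr_sqr expr1n fa subrr.
move/eqP; rewrite mulf_eq0 subr_eq0 (negbTE nota) /= addr_eq0 => /eqP ->.
by [].
Qed.
End Euler.

Lemma leg_bound (a : int) (p : nat) : -1 <= legendre a p <= 1.
Proof. by rewrite /legendre; case: ifP => _ //; case: ifP. Qed.

Lemma sum_bound (m : nat) (f : 'I_m -> int) : (forall i, -1 <= f i <= 1) ->
  - (m%:Z) <= \sum_i f i <= m%:Z.
Proof.
move=> H.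
have h1 : \sum_(i < m) (-1 : int) <= \sum_i f i by apply: ler_sum => i _; case/andP: (H i).
have h2 : \sum_i f i <= \sum_(i < m) (1 : int) by apply: ler_sum => i _; case/andP: (H i).
rewrite sumr_const card_ord mulNrn natz in h1.
rewrite sumr_const card_ord natz in h2.
by rewrite h1 h2.
Qed.

Section IntF.
Variables (p n : nat).
Hypothesis pp : prime p.
Hypothesis hpn : p = n.*2.+1.
Local Notation F := ('F_p).

Lemma small0 (z : int) : (z%:~R : F) = 0 -> - (p%:Z) < z -> z < p%:Z -> z = 0.
Proof.
move/eqP; rewrite Fp_int_eq0 // => /dvdzP [q ->] h1 h2.
have : q = 0 by nia.
by move=> ->; rewrite mul0r.
Qed.

Lemma two_neq0 : (2%:R : F) != 0.
Proof. by apply: Fp_nat_neq0; rewrite // hpn; have := n_gt0 pp hpn; lia. Qed.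

Lemma half0 (w : int) : ((w * 2)%:~R : F) = 0 -> - (p%:Z) < w -> w < p%:Z -> w = 0.
Proof.
move=> h; apply: small0; move/eqP: h; rewrite intrM mulf_eq0 orbC.
by rewrite (_ : (2%:~R : F) = 2%:R) // (negbTE two_neq0) /= => /eqP.
Qed.

Lemma leg_eqF (a b : int) : (a%:~R : F) ^+ n = (b%:~R) ^+ n -> legendre a p = legendre b p.
Proof.
rewrite -!(euler pp hpn) => /eqP; rewrite -subr_eq0 -intrB => /eqP /small0 H.
apply/eqP; rewrite -subr_eq0; apply/eqP; apply: H.
  have := leg_bound a p; have := leg_bound b p; have := n_gt0 pp hpn; rewrite hpn; lia.
have := leg_bound a p; have := leg_bound b p; have := n_gt0 pp hpn; rewrite hpn; lia.
Qed.

End IntF.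

Section Sums.
Variables (p n : nat).
Hypothesis pp : prime p.
Hypothesis hpn : p = n.*2.+1.
Local Notation F := ('F_p).

Lemma entryF (d : int) (j k : nat) :
  ((leg_entry d p j k)%:~R : F) = ((j%:R) ^+ 2 + d%:~R * (k%:R) ^+ 2) ^+ n.
Proof. by rewrite /leg_entry (euler pp hpn) rmorphD rmorphM /= !rmorphXn /= !intr_natF. Qed.

Lemma sqn1 (k : nat) : (0 < k < p)%N -> ((k%:R : F) ^+ 2) ^+ n = 1.
Proof.
case/andP=> k0 kp; rewrite -exprM mul2n -(pm1 hpn) fermat //.
exact: Fp_nat_neq0.
Qed.

Lemma colsumF (d : int) (k : nat) : (0 < k < p)%N ->
  ((\sum_(j < n) leg_entry d p j.+1 k)%:~R : F) * 2 + (legendre d p)%:~R = -1.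
Proof.
move=> hk; rewrite rmorph_sum (euler pp hpn) /=.
under eq_bigr do rewrite entryF.
set c := (d%:~R * (k%:R) ^+ 2 : F).
have hq : \sum_(x : F) (x ^+ 2 + c) ^+ n = -1.
  have := sum_quad pp hpn c 1; rewrite expr1n => <-.
  by apply: eq_bigr => x _; rewrite mul1r addrC.
have := sum_sq_split pp hpn (fun y => (y + c) ^+ n).
rewrite hq add0r /c exprMn (sqn1 hk) mulr1.
move=> h; rewrite [RHS]h mulr_natr addrC; reflexivity.
Qed.

Lemma colsum (d : int) (k : nat) : (0 < k < p)%N ->
  (legendre d p = 1 -> \sum_(j < n) leg_entry d p j.+1 k = -1) /\
  (legendre d p = -1 -> \sum_(j < n) leg_entry d p j.+1 k = 0).
Proof.
move=> hk; have hF := colsumF d hk.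
have hb := @sum_bound n (fun j : 'I_n => leg_entry d p j.+1 k) (fun _ => leg_bound _ _).
move: hF hb; set S := \sum_(j < n) _ => hF hb.
have i1 : (1%:~R : F) = 1 by [].
have i2 : (2%:~R : F) = 2 by [].
have im1 : ((-1)%:~R : F) = -1 by [].
split => hd; rewrite hd in hF.
  apply/eqP; rewrite -subr_eq0 opprK; apply/eqP; apply: (half0 pp hpn).
    rewrite intrM intrD i1 i2 mulrDl mul1r.
    have -> : (S%:~R : F) * 2 = -1 - 1 by rewrite i1 in hF; rewrite -[LHS](addrK 1) hF.
    by rewrite -opprD -mulr2n addNr.
  by move: hb; rewrite hpn; lia.
  by move: hb; rewrite hpn; lia.
apply: (half0 pp hpn).
  by rewrite intrM i2; move: hF; rewrite im1 => /eqP; rewrite subr_eq addNr => /eqP.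
  by move: hb; rewrite hpn; lia.
  by move: hb; rewrite hpn; lia.
Qed.

Lemma rowsum (d : int) (j : nat) : (0 < j < p)%N -> legendre d p = -1 ->
  \sum_(k < n) leg_entry d p j k.+1 = 0.
Proof.
move=> hj hd.
have hb := @sum_bound n (fun k : 'I_n => leg_entry d p j k.+1) (fun _ => leg_bound _ _).
move: hb; set S := \sum_(k < n) _ => hb.
apply: (half0 pp hpn); last 2 first.
  by move: hb; rewrite hpn; lia.
  by move: hb; rewrite hpn; lia.
have hdF : (d%:~R : F) ^+ n = -1 by rewrite -(euler pp hpn) hd.
rewrite intrM /S rmorph_sum /=.
under eq_bigr do rewrite entryF.
set c := ((j%:R : F) ^+ 2).
have := sum_sq_split pp hpn (fun y => (c + d%:~R * y) ^+ n).
rewrite (sum_quad pp hpn) hdF opprK mulr0 addr0 /c (sqn1 hj) => /eqP.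
rewrite eq_sym -subr_eq0 addrC addKr => /eqP h; rewrite (_ : (2%:~R : F) = 2%:R) // mulr_natr; exact: h.

Qed.
End Sums.

Section Part2.
Variables (p n : nat).
Hypothesis pp : prime p.
Hypothesis hpn : p = n.*2.+1.
Local Notation F := ('F_p).

Lemma Psum_small (i : nat) : (0 < i < n)%N -> \sum_(k < n) (((k.+1)%:R : F) ^+ 2) ^+ i = 0.
Proof.
case/andP => i0 iN.
have := sum_sq_split pp hpn (fun y => y ^+ i).
rewrite expr0n eqn0Ngt i0 /= add0r.
under eq_bigr do rewrite -exprM.
rewrite sum_pow0 //; last 2 first.
- by rewrite muln_gt0 i0.
- rewrite (pm1 hpn) -addnn; lia.
move/esym/eqP; rewrite -mulr_natr mulf_eq0 (negbTE (two_neq0 pp hpn)) orbF.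
by move/eqP.
Qed.

Lemma Psum_zero (i : nat) : (0 < i)%N -> (i < n.*2)%N -> i != n ->
  \sum_(k < n) (((k.+1)%:R : F) ^+ 2) ^+ i = 0.
Proof.
move=> i0 i2 ineq; case: (ltnP i n) => hi.
  by apply: Psum_small; rewrite i0 hi.
have hi' : (n < i)%N by rewrite ltn_neqAle eq_sym ineq hi.
transitivity (\sum_(k < n) (((k.+1)%:R : F) ^+ 2) ^+ (i - n)).
  apply: eq_bigr => k _.
rewrite -{1}(subnK (ltnW hi')) exprD (sqn1 pp hpn) ?mulr1 //.
  by rewrite /= hpn -addnn; have := ltn_ord k; lia.
by apply: Psum_small; rewrite -addnn in i2; apply/andP; split; lia.
Qed.

End Part2.



Lemma cofactor_eq (n : nat) (A B : 'M[int]_n) i0 :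
  (forall i j, i != i0 -> A i j = B i j) -> forall j, cofactor A i0 j = cofactor B i0 j.
Proof.
move=> H j; rewrite /cofactor; congr (_ * \det _).
by apply/matrixP => i k; rewrite !mxE H // eq_sym neq_lift.
Qed.

Lemma adj_row (n : nat) (A : 'M[int]_n) i i0 :
  \sum_j A i j * cofactor A i0 j = (\det A) *+ (i == i0).
Proof.
have := mul_mx_adj A; move/matrixP/(_ i i0); rewrite !mxE => <-.
by apply: eq_bigr => j _; rewrite mxE.
Qed.

Lemma adj_col (n : nat) (A : 'M[int]_n) j j0 :
  \sum_i cofactor A i j0 * A i j = (\det A) *+ (j0 == j).
Proof.
have := mul_adj_mx A; move/matrixP/(_ j0 j); rewrite !mxE => <-.
by apply: eq_bigr => i _; rewrite mxE.
Qed.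

Lemma det_colsum (N : nat) (A B : 'M[int]_N.+1) (c : int) :
  (forall i j, i != 0 -> A i j = B i j) -> (forall j, B 0 j = 1) ->
  (forall j, \sum_i A i j = c) -> \det A = c * \det B.
Proof.
move=> hAB hB hc.
have -> : \det A = \sum_i \sum_j A i j * cofactor A 0 j.
  rewrite (bigD1 0) //= [X in _ + X]big1 ?addr0; first by rewrite adj_row eqxx mulr1n.
  by move=> i /negbTE h; rewrite adj_row h mulr0n.
rewrite exchange_big /= (expand_det_row B 0) mulr_sumr; apply: eq_bigr => j _.
by rewrite -mulr_suml hc hB mul1r (cofactor_eq hAB).
Qed.

Lemma det_rowsum (N : nat) (B : 'M[int]_N.+1) :
  (forall j, B 0 j = 1) -> (forall i, i != 0 -> \sum_j B i j = 0) ->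
  \det B = N.+1%:R * cofactor B 0 0.
Proof.
move=> hB hs.
have -> : \det B = \sum_j \sum_i cofactor B i 0 * B i j.
  rewrite (bigD1 0) //= [X in _ + X]big1 ?addr0; first by rewrite adj_col eqxx mulr1n.
  by move=> j; rewrite eq_sym => /negbTE h; rewrite adj_col h mulr0n.
rewrite exchange_big /= (bigD1 0) //= [X in _ + X]big1 ?addr0.
  by rewrite -mulr_sumr (eq_bigr (fun _ => 1)) // sumr_const card_ord mulrC.
by move=> i h; rewrite -mulr_sumr hs // mulr0.
Qed.

Lemma det_T (N : nat) (M : 'M[int]_N.+2) (c : int) :
  (forall k, \sum_(i < N.+1) M (lift 0 i) k = if k == 0 then c else 0) ->
  \det M = c * cofactor M (lift 0 0) 0.
Proof.
move=> hs.
have -> : \det M = \sum_(i < N.+1) \sum_k M (lift 0 i) k * cofactor M (lift 0 0) k.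
  rewrite (bigD1 0) //= [X in _ + X]big1 ?addr0; first by rewrite adj_row eqxx mulr1n.
  by move=> i h; rewrite adj_row (inj_eq (@lift_inj _ 0)) (negbTE h) mulr0n.
rewrite exchange_big /= (bigD1 0) //= [X in _ + X]big1 ?addr0.
  by rewrite -mulr_suml hs eqxx.
by move=> k h; rewrite -mulr_suml hs (negbTE h) mul0r.
Qed.

Lemma det_negrow (N : nat) (A B : 'M[int]_N.+1) :
  (forall i j, i != 0 -> A i j = B i j) -> (forall j, A 0 j = - B 0 j) ->
  \det A = - \det B.
Proof.
move=> hAB h0; rewrite (expand_det_row A 0) (expand_det_row B 0) -sumrN.
by apply: eq_bigr => j _; rewrite h0 (cofactor_eq hAB) mulNr.
Qed.


Lemma rearr (R : comPzRingType) (v a b c : R) : v * (a * (b * c)) = (a * b) * (v * c).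
Proof. ring. Qed.

Lemma alg1 (R : comPzRingType) (nn C dn : R) : - (nn + C * dn * nn) + nn + C * dn * nn = 0.
Proof. ring. Qed.

Section Part2b.
Variables (p n : nat).
Hypothesis pp : prime p.
Hypothesis hpn : p = n.*2.+1.
Local Notation F := ('F_p).

Lemma partii (d : int) (m : nat) : (n < m)%N -> (m < p.-1)%N ->
  (p%:Z %| \det (pow_mx d m n.+1))%Z.
Proof.
move=> nm mp; have n0 := n_gt0 pp hpn.
rewrite -Fp_int_eq0 //.
have -> : ((\det (pow_mx d m n.+1))%:~R : F) = \det (map_mx (fun z : int => (z%:~R : F)) (pow_mx d m n.+1)).
  by rewrite det_map_mx.
set dd := (d%:~R : F).
set t := - (n%:R + 'C(m, n)%:R * dd ^+ n * n%:R) : F.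
rewrite -det_tr; apply/det0P; exists (\row_(k < n.+1) if k == 0 then t else 1).
  apply/eqP => /rowP /(_ (@Ordinal n.+1 1 n0)); rewrite !mxE /=; exact/eqP/oner_neq0.
apply/rowP => j; rewrite !mxE.
under eq_bigr do rewrite !mxE rmorphXn rmorphD rmorphM /= !rmorphXn /= !intr_natF exprDn mulr_sumr.
rewrite exchange_big /=.
set x := ((j : nat)%:R : F) ^+ 2.
pose P i := \sum_(k < n.+1) (if k == 0 then t else 1) * (((k : nat)%:R : F) ^+ 2) ^+ i.
have inner (i : 'I_m.+1) : \sum_(k < n.+1) (if k == 0 then t else 1) *
      (x ^+ (m - i) * (dd * ((k : nat)%:R) ^+ 2) ^+ i *+ 'C(m, i))
    = (x ^+ (m - i) * dd ^+ i *+ 'C(m, i)) * P i.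
  rewrite /P mulr_sumr; apply: eq_bigr => k _; rewrite [(dd * _) ^+ _]exprMn.
  by rewrite mulrnAr mulrnAl rearr.
rewrite (eq_bigr _ (fun i _ => inner i)).
have Pv (i : nat) : P i = (if i == 0%N then t else 0) + \sum_(k < n) (((k.+1)%:R : F) ^+ 2) ^+ i.
  rewrite /P big_ord_recl /= expr0n; congr (_ + _).
    by rewrite /= expr0n; case: (i == 0%N); rewrite ?mulr1 ?mulr0.
  by apply: eq_bigr => k _; rewrite mul1r /bump /= add1n.
have nord : (n < m.+1)%N by apply: ltnW.
rewrite (bigD1 ord0) //= (bigD1 (Ordinal nord)) /=; last by rewrite -(inj_eq val_inj) /= -lt0n.
rewrite big1 ?addr0; last first.
  move=> i /andP [i0 ineq]; rewrite Pv.
  have i0' : ((i : nat) == 0%N) = false by move: i0; rewrite -(inj_eq val_inj) => /negbTE.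
  rewrite i0' add0r (Psum_zero pp hpn) ?mulr0 //.
  - by rewrite lt0n i0'.
  - by rewrite -(pm1 hpn); apply: leq_trans mp; rewrite ltnS -ltnS.
rewrite !Pv /= (negbTE (lt0n_neq0 n0)) add0r subn0 expr0 mulr1 bin0 mulr1n.
rewrite (eq_bigr (fun _ => 1)); last by move=> k _; rewrite expr0.
rewrite sumr_const card_ord.
rewrite (eq_bigr (fun _ => 1)); last by move=> k _; rewrite (sqn1 pp hpn) // hpn -addnn; have := ltn_ord k; lia.
rewrite sumr_const card_ord.
have hx : x ^+ m = x ^+ (m - n).
  have -> : m = (m - n + n)%N by rewrite subnK // ltnW.
  rewrite addnK exprD; case: (posnP j) => [j0|j0].
    by rewrite /x j0 expr0n /= [0 ^+ (m - n)]expr0n subn_eq0 leqNgt nm /= mul0r.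
  by rewrite /x (sqn1 pp hpn) ?mulr1 // j0 /= hpn -addnn; have := ltn_ord j; lia.
rewrite hx -mulrnAr -mulrA -mulrDr /t.
by rewrite -[dd ^+ n *+ _]mulr_natl alg1 mulr0.
Qed.
End Part2b.


Lemma ord_neq0 (m : nat) (i : 'I_m.+1) : i != 0 -> ((i : nat) == 0%N) = false.
Proof. by move: i => [[|i] hi]. Qed.

Section Part1.
Variables (p N : nat).
Hypothesis pp : prime p.
Hypothesis hpn : p = N.+1.*2.+1.
Local Notation F := ('F_p).
Local Notation n := N.+1.

Lemma leg_val1 (a : int) : (a%:~R : F) ^+ n = 1 -> legendre a p = 1.
Proof.
rewrite -(euler pp hpn) => h; apply/eqP; rewrite -subr_eq0; apply/eqP.
apply: (small0 pp hpn); first by rewrite intrD intrN h; exact: subrr.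
  by have := leg_bound a p; rewrite hpn; lia.
by have := leg_bound a p; rewrite hpn; lia.
Qed.

Lemma leg_j0 (d : int) (j : nat) : (0 < j < p)%N -> leg_entry d p j 0 = 1.
Proof.
move=> hj; apply: leg_val1.
by rewrite rmorphD rmorphM /= !rmorphXn /= !intr_natF expr0n /= mulr0 addr0 (sqn1 pp hpn).
Qed.

Lemma leg_0k (d : int) (k : nat) : (0 < k < p)%N -> leg_entry d p 0 k = legendre d p.
Proof.
move=> hk; apply: (leg_eqF pp hpn).
rewrite rmorphD rmorphM /= !rmorphXn /= !intr_natF expr0n /= add0r.
by rewrite exprMn (sqn1 pp hpn) // mulr1.
Qed.

Lemma part1a (d : int) : legendre d p = 1 ->
  \det (leg_mx_bar d p n) = - \det (leg_mx d p 1 n).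
Proof.
move=> hd.
have := @det_colsum N (leg_mx d p 1 n) (leg_mx_bar d p n) (-1).
rewrite mulN1r => -> //; first by rewrite opprK.
- by move=> i j h; rewrite !mxE (ord_neq0 h) !addn1.
- by move=> j; rewrite !mxE eqxx.
move=> j.
under eq_bigr do rewrite mxE !addn1.
apply: (colsum pp hpn d (k := j.+1) _).1 hd.
by rewrite /= hpn -addnn; have := ltn_ord j; lia.
Qed.


Lemma part1b (d : int) : legendre d p = -1 ->
  \det (leg_mx_bar d p n) = n%:R * \det (leg_mx d p 2 N).
Proof.
move=> hd; rewrite det_rowsum.
- rewrite /cofactor expr0 mul1r; congr (_ * \det _).
  by apply/matrixP => i k; rewrite !mxE /= !addn2.
- by move=> j; rewrite !mxE eqxx.
move=> i h.
under eq_bigr do rewrite mxE (ord_neq0 h).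
apply: (rowsum pp hpn) => //.
by rewrite /= hpn -addnn; have := ltn_ord i; lia.
Qed.

Lemma part1c (d : int) : legendre d p = -1 ->
  \det (leg_mx d p 0 n.+1) = n%:R * \det (leg_mx_bar d p n).
Proof.
move=> hd; rewrite (@det_T N _ n%:R).
  congr (_ * _); rewrite /cofactor /= expr1 mulN1r.
  rewrite (@det_negrow N _ (leg_mx_bar d p n)) ?opprK //.
    move=> i j h; rewrite !mxE (ord_neq0 h) /= !addn0.
    by case: i h => [[|i] hi] h.
  move=> j; rewrite !mxE /=.
  have -> : (bump (bump 0 0) 0 + 0 = 0)%N by [].
  have -> : (bump 0 j + 0 = j.+1)%N by rewrite /bump /= addn0 add1n.
  rewrite leg_0k ?hd //.
  by rewrite /= hpn -addnn; have := ltn_ord j; lia.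
move=> k.
under eq_bigr do rewrite mxE !addn0 lift0.
case: (eqVneq k 0) => [->|hk].
  rewrite (eq_bigr (fun _ => 1)) ?sumr_const ?card_ord //.
  move=> i _; rewrite leg_j0 //.
  by rewrite /= hpn -addnn; have := ltn_ord i; lia.
apply: (colsum pp hpn d (k := k) _).2 hd.
have := ltn_ord k; have := ord_neq0 hk; rewrite hpn -addnn; lia.
Qed.
End Part1.


Unset Implicit Arguments.
Theorem theorem1p1 (p : nat) (d : int) :
  prime p -> (3 < p)%N ->
  let n := (p.-1)./2 in
  let S := \det (leg_mx d p 1 n) in
  let T := \det (leg_mx d p 0 n.+1) in
  let Sbar := \det (leg_mx_bar d p n) in
  let S2 := \det (leg_mx d p 2 n.-1) in
  ((legendre d p = 1 -> Sbar = - S) /\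
   (legendre d p = -1 ->
      (Sbar%:~R : rat) = 2 / (p%:R - 1) * T%:~R /\
      (Sbar%:~R : rat) = (p%:R - 1) / 2 * S2%:~R))
  /\
  (forall m : nat, ((p.-1)./2 < m)%N -> (m < p.-1)%N ->
     (p%:Z %| \det (pow_mx d m n.+1))%Z).
Proof.
move=> pp p3; cbv zeta.
have ho : odd p by case: (even_prime pp) => [e2|//]; rewrite e2 in p3.
have hp : p = (p./2).*2.+1 by rewrite -[p in LHS]odd_double_half ho add1n.
have hn : (p.-1)./2 = p./2 by rewrite [in LHS]hp /= doubleK.
rewrite hn; move: (p./2) hp => n hpn.
case: n hpn => [|N] hpn; first by rewrite hpn in p3.
split; last by move=> m h1 h2; apply: (partii pp hpn).
split; first exact: (part1a pp hpn).
move=> hd; split.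
  rewrite (part1c pp hpn hd) intrM.
  rewrite natz -pmulrn.
  have -> : (p%:R - 1 : rat) = 2 * N.+1%:R.
    by rewrite hpn -addnn -addn1 !natrD addrK mulr_natl mulr2n.
  field.
  by rewrite (_ : 1 + N%:R = N.+1%:R :> rat) ?pnatr_eq0 // -add1n natrD.
rewrite (part1b pp hpn hd) intrM.
rewrite natz -pmulrn.
have -> : (p%:R - 1 : rat) = 2 * N.+1%:R.
  by rewrite hpn -addnn -addn1 !natrD addrK mulr_natl mulr2n.
by field.
Qed.
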